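(* Suppose $G_1$ and $G_2$ are topological groups and there exist continuous injective group homomorphisms $\varphi_1:G_1\to G_2$ and $\varphi_2:G_2\to G_1$. Let $\mathcal C$ be a class of subgroups which is closed under continuous homomorphic images. If $G_1$ has a universal $\mathcal C$ subgroup, then $G_2$ also has a universal $\mathcal C$ subgroup.
   Context: $\mathcal C$ is a class of subgroups of topological groups; closed under continuous homomorphic images means: if $H\in\mathcal C$ is a subgroup of a topological group $G$ and $\psi:G\to G'$ is a continuous group homomorphism into a topological group $G'$, then $\psi(H)\in\mathcal C$. For subgroups $H\subseteq G$ and $K\subseteq G'$, write $H\le_g K$ if there is a continuous homomorphism $\varphi:G\to G'$ with $\varphi^{-1}(K)=H$. A universal $\mathcal C$ subgroup of $G$ is a subgroup $K\subseteq G$ with $K\in\mathcal C$ such that $H\le_g K$ (via a continuous endomorphism of $G$) for every subgroup $H\subseteq G$ with $H\in\mathcal C$. *)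

(* Defs.v *)
From HB Require Import structures.
From mathcomp Require Import all_boot all_order all_algebra.
From mathcomp Require Import all_classical all_reals all_analysis.
Set Implicit Arguments. Unset Strict Implicit. Unset Printing Implicit Defensive.
Local Open Scope classical_set_scope.

Record topGroup := TopGroup {
  tg_car :> topologicalType;
  tg_mul : tg_car -> tg_car -> tg_car;
  tg_inv : tg_car -> tg_car;
  tg_one : tg_car;
  tg_mulA : forall x y z, tg_mul x (tg_mul y z) = tg_mul (tg_mul x y) z;
  tg_mul1g : forall x, tg_mul tg_one x = x;
  tg_mulg1 : forall x, tg_mul x tg_one = x;
  tg_mulVg : forall x, tg_mul (tg_inv x) x = tg_one;
  tg_mulgV : forall x, tg_mul x (tg_inv x) = tg_one;
  tg_mul_cont : continuous (fun p : tg_car * tg_car => tg_mul p.1 p.2);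
  tg_inv_cont : continuous tg_inv
}.

Definition is_subgroup (G : topGroup) (H : set G) : Prop :=
  H (tg_one G) /\
  (forall x y, H x -> H y -> H (tg_mul x y)) /\
  (forall x, H x -> H (tg_inv x)).

Definition cont_hom (G G' : topGroup) (f : G -> G') : Prop :=
  continuous f /\ forall x y, f (tg_mul x y) = tg_mul (f x) (f y).

Definition subgroup_class := forall G : topGroup, set G -> Prop.

Definition closed_under_cont_hom_images (C : subgroup_class) : Prop :=
  forall (G G' : topGroup) (psi : G -> G') (H : set G),
    cont_hom psi -> is_subgroup H -> C G H -> C G' (psi @` H).

Definition le_g (G G' : topGroup) (H : set G) (K : set G') : Prop :=
  exists phi : G -> G', cont_hom phi /\ phi @^-1` K = H.

Definition universal_subgroup (C : subgroup_class) (G : topGroup) (K : set G) : Prop :=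
  is_subgroup K /\ C G K /\
  forall H : set G, is_subgroup H -> C G H -> le_g H K.

(* Main.v *)
Require Import Defs.
From mathcomp Require Import all_boot all_order all_algebra.
From mathcomp Require Import all_classical all_reals all_analysis.
Set Implicit Arguments.
Local Open Scope classical_set_scope.

Lemma idem_one (G : topGroup) (y : G) : tg_mul y y = y -> y = tg_one G.
Proof.
move=> h. rewrite -(tg_mul1g y) -(tg_mulVg y) -tg_mulA h. by [].
Qed.

Lemma inv_uniq (G : topGroup) (a b : G) : tg_mul a b = tg_one G -> a = tg_inv b.
Proof.
move=> h. by rewrite -(tg_mulg1 a) -(tg_mulgV b) tg_mulA h tg_mul1g.
Qed.

Lemma hom_one (G G' : topGroup) (f : G -> G') : cont_hom f -> f (tg_one G) = tg_one G'.
Proof.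
move=> [_ hf]. apply: idem_one. by rewrite -hf tg_mulg1.
Qed.

Lemma hom_inv (G G' : topGroup) (f : G -> G') x : cont_hom f -> f (tg_inv x) = tg_inv (f x).
Proof.
move=> hc. apply: inv_uniq. have [_ hf] := hc. by rewrite -hf tg_mulVg hom_one.
Qed.

Lemma image_subgroup (G G' : topGroup) (f : G -> G') H :
  cont_hom f -> is_subgroup H -> is_subgroup (f @` H).
Proof.
move=> hc [h1 [hm hi]]. split; first by exists (tg_one G) => //; rewrite hom_one.
split.
- move=> _ _ [x Hx <-] [y Hy <-]. exists (tg_mul x y); first exact: hm.
  by case: hc => _ ->.
- move=> _ [x Hx <-]. exists (tg_inv x); first exact: hi. by rewrite hom_inv.
Qed.

Lemma comp_hom (G G' G'' : topGroup) (f : G -> G') (g : G' -> G'') :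
  cont_hom f -> cont_hom g -> cont_hom (g \o f).
Proof.
move=> [cf hf] [cg hg]; split.
- move=> x. apply: continuous_comp; [exact: cf | exact: cg].
- by move=> x y /=; rewrite hf hg.
Qed.

Theorem mainTheorem5 (G1 G2 : topGroup) (phi1 : G1 -> G2) (phi2 : G2 -> G1)
  (C : subgroup_class) :
  cont_hom phi1 -> injective phi1 ->
  cont_hom phi2 -> injective phi2 ->
  closed_under_cont_hom_images C ->
  (exists K1 : set G1, universal_subgroup C K1) ->
  exists K2 : set G2, universal_subgroup C K2.
Proof.
move=> h1 i1 h2 i2 hC [K1 [sK1 [cK1 uK1]]].
exists (phi1 @` K1); split; first exact: image_subgroup.
split; first exact: hC.
move=> H sH cH.
have [psi [hpsi epsi]] := uK1 _ (image_subgroup h2 sH) (hC G2 G1 phi2 H h2 sH cH).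
exists (phi1 \o (psi \o phi2)); split.
  by apply: comp_hom => //; apply: comp_hom.
apply/seteqP; split => x /=.
- move=> [y Ky ey]. have := i1 _ _ ey => {}ey.
  have : (psi @^-1` K1) (phi2 x) by rewrite /= -ey.
  rewrite epsi => -[z Hz ez]. by rewrite -(i2 _ _ ez).
- move=> Hx. exists (psi (phi2 x)) => //.
  have : (phi2 @` H) (phi2 x) by exists x.
  by rewrite -epsi.
Qed.
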